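(* Let $f:X\to Y$ be a continuous surjective map between compact Hausdorff spaces. Then for all $\mu,\nu\in HX$ and $t\in[0,1]$ we have $e(Hf(\mu),Hf(\nu),t)=Hf(e(\mu,\nu,t))$.
   Context: For a compact Hausdorff space $X$, let $HM(X)$ be the set of all maps $\alpha:[0,1)\to X$ for which there exist $0=t_0<t_1<\dots<t_n=1$ such that $\alpha$ is constant on each $[t_i,t_{i+1})$. Let $C(X)$ be the set of continuous real-valued functions on $X$. For $\varphi\in C(X)$ and $0\le a<b\le 1$ define $\varphi_{(a,b)}:HM(X)\to\mathbb{R}$ by $\varphi_{(a,b)}(\alpha)=\frac{1}{b-a}\int_a^b\varphi(\alpha(t))\,dt$, and let $S_{HM}(X)$ be the set of all such functions. The map $\alpha\mapsto(\varphi_{(a,b)}(\alpha))$ embeds $HM(X)$ into the product $\prod_{\varphi_{(a,b)}\in S_{HM}(X)}[\min\varphi,\max\varphi]$; $HX$ is the closure of the image of $HM(X)$, and $p_{\varphi_{(a,b)}}:HX\to\mathbb{R}$ is the coordinate projection. For continuous $f:X\to Y$, $Hf:HX\to HY$ is the unique continuous map with $p_{\varphi_{(a,b)}}\circ Hf=p_{(\varphi\circ f)_{(a,b)}}$ for all $\varphi\in C(Y)$, $0\le a<b\le1$ (it extends $\alpha\mapsto f\circ\alpha$). The map $e_1:HM(X)\times HM(X)\times[0,1]\to HM(X)$ is given by $e_1(\alpha_1,\alpha_2,t)(l)=\alpha_1(l)$ if $l<t$ and $=\alpha_2(l)$ if $l\ge t$; $e:HX\times HX\times[0,1]\to HX$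 denotes its (unique) continuous extension. *)

(* Defs.v *)
From HB Require Import structures.
From mathcomp Require Import all_boot all_order all_algebra.
From mathcomp Require Import all_classical all_reals all_analysis.
Set Implicit Arguments. Unset Strict Implicit. Unset Printing Implicit Defensive.
Import Order.TTheory GRing.Theory Num.Theory.
Import numFieldNormedType.Exports.
Local Open Scope classical_set_scope.
Local Open Scope ring_scope.

Section HDefs.
Variables (R : realType).

(* HM(X): maps [0,1) -> X, constant on the pieces [t_i, t_{i+1}) of a finite
   partition 0 = t_0 < ... < t_n = 1.  They are represented as total maps
   R -> X; values outside [0,1) are irrelevant. *)
Definition is_HM (X : Type) (alpha : R -> X) : Prop :=
  exists (n : nat) (t : nat -> R),
    [/\ t 0%N = 0, t n = 1,
        (forall i, (i < n)%N -> t i < t i.+1) &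
        (forall i, (i < n)%N -> forall l, t i <= l -> l < t i.+1 ->
           alpha l = alpha (t i))].

Record Hidx (X : topologicalType) := MkHidx {
  hphi : X -> R;
  ha : R;
  hb : R;
  hphi_cont : continuous hphi;
  hab : [/\ 0 <= ha, ha < hb & hb <= 1] }.

Definition Hprod (X : topologicalType) := {ptws Hidx X -> R}.

Definition Havg (X : topologicalType) (phi : X -> R) (a b : R) (alpha : R -> X) : R :=
  (b - a)^-1 * (\int[lebesgue_measure]_(t in `[a, b]) phi (alpha t)).

Definition Hemb (X : topologicalType) (alpha : R -> X) : Hprod X :=
  fun i => Havg (hphi i) (ha i) (hb i) alpha.

Definition HX (X : topologicalType) : set (Hprod X) :=
  closure (@Hemb X @` [set alpha | is_HM alpha]).

Definition e1 (X : Type) (alpha1 alpha2 : R -> X) (t : R) : R -> X :=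
  fun l => if l < t then alpha1 l else alpha2 l.

Definition is_e_ext (X : topologicalType) (e : Hprod X * Hprod X * R -> Hprod X) : Prop :=
  {within [set p | HX p.1.1 /\ HX p.1.2 /\ 0 <= p.2 <= 1], continuous e} /\
  (forall (alpha1 alpha2 : R -> X) t, is_HM alpha1 -> is_HM alpha2 -> 0 <= t <= 1 ->
     e (@Hemb X alpha1, @Hemb X alpha2, t) = @Hemb X (e1 alpha1 alpha2 t)).

Definition Hidx_comp (X Y : topologicalType) (f : X -> Y) (hf : continuous f)
  (i : Hidx Y) : Hidx X :=
  @MkHidx X (hphi i \o f) (ha i) (hb i)
    (fun x => continuous_comp (hf x) (@hphi_cont Y i (f x))) (hab i).

Definition Hmap (X Y : topologicalType) (f : X -> Y) (hf : continuous f)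
  (mu : Hprod X) : Hprod Y :=
  fun i => mu (Hidx_comp hf i).

End HDefs.

(* Main.v *)
Require Import Defs.
From HB Require Import structures.
From mathcomp Require Import all_boot all_order all_algebra.
From mathcomp Require Import all_classical all_reals all_analysis.
Import Order.TTheory GRing.Theory Num.Theory.
Import numFieldNormedType.Exports.
Local Open Scope classical_set_scope.
Local Open Scope ring_scope.
Section S.
Variable R : realType.

Lemma prod_cvgP (I : Type) (F : set_system (prod_topology (fun _ : I => R)))
  (g : prod_topology (fun _ : I => R)) : Filter F ->
  (F --> g) <-> (forall i, (fun h : prod_topology (fun _ : I => R) => h i) @ F --> g i).
Proof.
move=> FF.
have E := @cvg_sup _ I (fun i => Topological.class
    (initial_topology (fun f : (forall i, (fun _ : I => R) i) => f i))) F g FF.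
split.
- move=> H i; have := (E.1 H i).
  move=> H2; apply: (cvg_trans (cvg_app (fun h : initial_topology (fun f : (forall i, (fun _ : I => R) i) => f i) => h i) H2)).
  exact: (@initial_continuous _ _ (fun f : (forall i, (fun _ : I => R) i) => f i)).
- move=> H; apply: E.2 => i A /= [B [[C oC <-] Bg] BA].
  apply: filterS BA _; apply: (H i); exact: open_nbhs_nbhs.
Qed.

Lemma prod_hausdorff (I : Type) : hausdorff_space (prod_topology (fun _ : I => R)).
Proof.
move=> p q /= clstr; apply: functional_extensionality_dep => x.
apply: Rhausdorff; move: clstr; rewrite ?cluster_cvgE /= => -[G PG [GtoQ psubG]].
exists ((fun h : prod_topology (fun _ : I => R) => h x) @ G); [exact: fmap_proper_filter|split].
  have := (@prod_cvgP I G q _).1 GtoQ; apply.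
have : nbhs p --> p by [].
move/(@prod_cvgP I (nbhs p) p _).1 => /(_ x) H.
apply: cvg_trans H; exact: cvg_app.
Qed.

Variables (X Y : topologicalType) (f : X -> Y) (hf : continuous f).

Lemma Hmap_cont : continuous (Hmap (R:=R) hf).
Proof.
move=> mu.
apply: (@prod_cvgP (Hidx R Y) (Hmap hf @ nbhs mu) (Hmap hf mu) _).2 => i.
have : nbhs mu --> mu by [].
move/(@prod_cvgP (Hidx R X) (nbhs mu) mu _).1 => /(_ (Hidx_comp hf i)) H.
move=> A /H. done.
Qed.

Lemma Hmap_Hemb (a : R -> X) : Hmap hf (Hemb a) = Hemb (f \o a).
Proof. by []. Qed.

Lemma is_HM_comp (a : R -> X) : is_HM a -> is_HM (f \o a).
Proof.
move=> [n [t [h0 h1 h2 h3]]]; exists n, t; split => // i ilt l l1 l2 /=.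
by rewrite (h3 i ilt l l1 l2).
Qed.

Lemma e1_comp (a1 a2 : R -> X) t : e1 (f \o a1) (f \o a2) t = f \o e1 a1 a2 t.
Proof. by apply: funext => l; rewrite /e1 /=; case: ifP. Qed.

Lemma Hmap_HX mu : HX mu -> HX (Hmap (R:=R) hf mu).
Proof.
move=> hmu B nB.
have /hmu [z [[a ha <-] Bz]] : nbhs mu (Hmap hf @^-1` B) by exact: Hmap_cont.
exists (Hemb (f \o a)); split; last by rewrite -Hmap_Hemb.
by exists (f \o a) => //; exact: is_HM_comp.
Qed.

End S.

Arguments is_HM_comp {R X Y f a}.

Lemma box3 (A B C : topologicalType) (a:A) (b:B) (c:C) (P : set (A * B * C)) :
  nbhs (a,b,c) P -> exists A1 B1 C1, [/\ nbhs a A1, nbhs b B1, nbhs c C1 &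
    forall x y z, A1 x -> B1 y -> C1 z -> P (x,y,z)].
Proof.
move=> [[Q1 Q2] /= [nQ1 nQ2] sub].
move: nQ1 => [[A1 B1] /= [nA nB] sub2].
exists A1, B1, Q2; split => // x y z ? ? ?; apply: sub; split => //=.
exact: sub2.
Qed.

Theorem lemma3p1 (R : realType) (X Y : topologicalType)
  (cX : compact [set: X]) (hX : hausdorff_space X)
  (cY : compact [set: Y]) (hY : hausdorff_space Y)
  (f : X -> Y) (hf : continuous f) (fsurj : forall y : Y, exists x : X, f x = y)
  (eX : Hprod R X * Hprod R X * R -> Hprod R X)
  (eY : Hprod R Y * Hprod R Y * R -> Hprod R Y) :
  is_e_ext eX -> is_e_ext eY ->
  forall (mu nu : Hprod R X) (t : R), HX mu -> HX nu -> 0 <= t <= 1 ->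
    eY (Hmap hf mu, Hmap hf nu, t) = Hmap hf (eX (mu, nu, t)).
Proof.
move=> [cX' eXH] [cY' eYH] mu nu t hmu hnu ht.
apply: prod_hausdorff => U W nU nW.
have hq : [set p : Hprod R Y * Hprod R Y * R | HX p.1.1 /\ HX p.1.2 /\ 0 <= p.2 <= 1]
   (Hmap hf mu, Hmap hf nu, t).
  by split; [exact: Hmap_HX | split; [exact: Hmap_HX | exact: ht]].
have hp : [set p : Hprod R X * Hprod R X * R | HX p.1.1 /\ HX p.1.2 /\ 0 <= p.2 <= 1]
   (mu, nu, t) by [].
have := (subspace_continuousP _ eY).1 cY' _ hq U nU.
move=> /box3 [A1 [A2 [C1 [nA1 nA2 nC1 subY]]]].
have nW' : nbhs (eX (mu, nu, t)) (Hmap hf @^-1` W) by exact: Hmap_cont.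
have := (subspace_continuousP _ eX).1 cX' _ hp _ nW'.
move=> /box3 [B1 [B2 [C2 [nB1 nB2 nC2 subX]]]].
have nD1 : nbhs mu (B1 `&` (Hmap hf @^-1` A1)).
  by apply: filterI => //; exact: Hmap_cont.
have nD2 : nbhs nu (B2 `&` (Hmap hf @^-1` A2)).
  by apply: filterI => //; exact: Hmap_cont.
have [z1 [[a1 ha1 <-] [Bz1 Az1]]] := hmu _ nD1.
have [z2 [[a2 ha2 <-] [Bz2 Az2]]] := hnu _ nD2.
have Ct1 := nbhs_singleton nC1.
have Ct2 := nbhs_singleton nC2.
have HXe : forall (Z : topologicalType) (a : R -> Z), is_HM a -> HX (Hemb a).
  by move=> Z a ha; apply: subset_closure; exists a.
exists (eY (Hmap hf (Hemb a1), Hmap hf (Hemb a2), t)); split.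
  apply: (subY _ _ _ Az1 Az2 Ct1).
  rewrite !Hmap_Hemb; split => /=; [exact: HXe (is_HM_comp ha1)|].
  by split => /=; [exact: HXe (is_HM_comp ha2)|exact: ht].
rewrite !Hmap_Hemb (eYH _ _ _ (is_HM_comp ha1) (is_HM_comp ha2) ht) e1_comp.
rewrite -Hmap_Hemb -(eXH _ _ _ ha1 ha2 ht).
apply: (subX _ _ _ Bz1 Bz2 Ct2).
by split => /=; [exact: HXe ha1 | split => /=; [exact: HXe ha2 | exact: ht]].
Qed.
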